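(* Let $d\geq 1$, let $p_1<\dots<p_d$ be the first $d$ prime numbers, let $N\geq 1$ be an integer, let $C>0$, and let $p\geq 1$ be real. For $1\le k\le d$ let $\mathbf{b}_k\in\mathbb{R}^{d+1}$ be the vector with entry $(\ln p_k)^{1/p}$ in coordinate $k$, entry $C\ln p_k$ in coordinate $d+1$, and zeros elsewhere, and let $\mathbf{t}=(0,\dots,0,C\ln N)^T\in\mathbb{R}^{d+1}$. Define $D_0=1$ and $$D_j=1+C^2\sum_{i=1}^j(\ln p_i)^{2-2/p},\qquad 1\le j\le d.$$ Let $\mathbf{b}_1^\star,\dots,\mathbf{b}_d^\star,\mathbf{t}^\star$ be the Gram–Schmidt orthogonalization of the ordered family $(\mathbf{b}_1,\dots,\mathbf{b}_d,\mathbf{t})$. Then for $1\le k\le d$ and $1\le i\le d+1$, $$(\mathbf{b}_k^\star)_i=\begin{cases}-\dfrac{C^2\ln p_k(\ln p_i)^{1-1/p}}{D_{k-1}} & i<k,\\ (\ln p_k)^{1/p} & i=k,\\ 0 & k<i<d+1,\\ \dfrac{C\ln p_k}{D_{k-1}} & i=d+1,\end{cases}$$ and $$(\mathbf{t}^\star)_i=\begin{cases}-\dfrac{C^2(\ln N)(\ln p_i)^{1-1/p}}{D_d} & i<d+1,\\ \dfrac{C\ln N}{D_d} & i=d+1.\end{cases}$$ Moreover $\|\mathbf{b}_k^\star\|_2^2=(\ln p_k)^{2/p}\dfrac{D_k}{D_{k-1}}$ for $1\le k\le d$, $\|\mathbf{t}^\star\|_2^2=\dfrac{(C\ln N)^2}{D_d}$,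 and the orthogonal projection $\mathbf{t}-\mathbf{t}^\star$ of $\mathbf{t}$ onto the span of $\mathbf{b}_1,\dots,\mathbf{b}_d$ is given by $$(\mathbf{t}-\mathbf{t}^\star)_i=\begin{cases}\dfrac{C^2(\ln N)(\ln p_i)^{1-1/p}}{D_d} & i<d+1,\\ \dfrac{C(\ln N)(D_d-1)}{D_d} & i=d+1.\end{cases}$$
   Context: $\ln$ is the natural logarithm, $\|\cdot\|_2$ the Euclidean norm, and $(\mathbf{v})_i$ denotes the $i$-th coordinate of $\mathbf{v}$. Gram–Schmidt orthogonalization of $(\mathbf{v}_1,\dots,\mathbf{v}_m)$: $\mathbf{v}_k^\star=\mathbf{v}_k-\sum_{j<k}\mu_{k,j}\mathbf{v}_j^\star$ with $\mu_{k,j}=\frac{\mathbf{v}_k\cdot\mathbf{v}_j^\star}{\mathbf{v}_j^\star\cdot\mathbf{v}_j^\star}$. *)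

(* Defs.v *)
From HB Require Import structures.
From mathcomp Require Import all_boot all_order all_algebra.
From mathcomp Require Import reals exp.
Set Implicit Arguments. Unset Strict Implicit. Unset Printing Implicit Defensive.
Import Order.TTheory GRing.Theory Num.Theory.
Local Open Scope ring_scope.

Definition next_prime (n : nat) : nat :=
  ex_minn (let: exist2 p Hnp Hp := prime_above n in
           ex_intro (fun q => prime q && (n < q)%N) p (introT andP (conj Hp Hnp))).

(* nth_prime k = the (k+1)-th prime (0-based): 2, 3, 5, 7, ... *)
Fixpoint nth_prime (k : nat) : nat :=
  match k with 0 => 2 | k'.+1 => next_prime (nth_prime k') end.

Section GS.
Variable R : realType.
Variable n : nat.

Definition dotv (u v : 'rV[R]_n) : R := \sum_(i < n) u 0 i * v 0 i.

Definition gs_step (acc : seq 'rV[R]_n) (v : 'rV[R]_n) : seq 'rV[R]_n :=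
  rcons acc (v - \sum_(w <- acc) (dotv v w / dotv w w) *: w).

Definition gram_schmidt (s : seq 'rV[R]_n) : seq 'rV[R]_n := foldl gs_step [::] s.
End GS.

Section Lattice.
Variable R : realType.
Variables (d N : nat) (C p : R).

Definition lnp (k : nat) : R := ln (nth_prime k)%:R.

Definition bvec (k : 'I_d) : 'rV[R]_(d.+1) :=
  \row_(i < d.+1) (if (i : nat) == (k : nat) then powR (lnp k) p^-1
                   else if (i : nat) == d then C * lnp k else 0).

Definition tvec : 'rV[R]_(d.+1) :=
  \row_(i < d.+1) (if (i : nat) == d then C * ln N%:R else 0).

(* D j = 1 + C^2 sum_{i=1}^j (ln p_i)^{2-2/p}; here the sum is over 0-based i < j *)
Definition Dj (j : nat) : R := 1 + C ^+ 2 * \sum_(i < j) powR (lnp i) (2 - 2 / p).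

Definition family : seq 'rV[R]_(d.+1) := [seq bvec k | k <- enum 'I_d] ++ [:: tvec].
Definition gs_family := gram_schmidt family.
Definition bstar (k : 'I_d) : 'rV[R]_(d.+1) := nth 0 gs_family k.
Definition tstar : 'rV[R]_(d.+1) := nth 0 gs_family d.
End Lattice.

Arguments bvec {R} d C p k.
Arguments tvec {R} d N C.
Arguments Dj {R} C p j.
Arguments family {R} d N C p.
Arguments gs_family {R} d N C p.
Arguments bstar {R} d N C p k.
Arguments tstar {R} d N C p.

(* Main.v *)
Require Import Defs.
From HB Require Import structures.
From mathcomp Require Import all_boot all_order all_algebra.
From mathcomp Require Import reals exp.
From mathcomp Require Import ring lra.
Import Order.TTheory GRing.Theory Num.Theory.
Local Open Scope ring_scope.

Lemma nth_prime_prime k : prime (nth_prime k).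
Proof.
case: k => [|k] //=. rewrite /next_prime.
by case: ex_minnP => q /andP[].
Qed.

Lemma lnp_gt0 (R : realType) k : 0 < lnp R k.
Proof.
rewrite /lnp; apply: ln_gt0; rewrite ltr1n; exact: prime_gt1 (nth_prime_prime k).
Qed.

Definition uu (R : realType) (p : R) j := powR (lnp R j) p^-1.
Definition ww (R : realType) (p : R) j := powR (lnp R j) (1 - p^-1).
Arguments uu {R}.
Arguments ww {R}.

Lemma uw {R : realType} (p : R) j : uu p j * ww p j = lnp R j.
Proof.
rewrite /uu /ww -powRD; last by rewrite (gt_eqF (lnp_gt0 R j)) implybT.
by rewrite addrC subrK powRr1 // ltW // lnp_gt0.
Qed.

Lemma ww2 {R : realType} (p : R) j : powR (lnp R j) (2 - 2 / p) = ww p j ^+ 2.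
Proof.
rewrite /ww -powR_mulrn ?powR_ge0 // -powRrM; congr powR.
by rewrite mulrBl mul1r mulrC.
Qed.

Lemma uu2 {R : realType} (p : R) j : powR (lnp R j) (2 / p) = uu p j ^+ 2.
Proof.
rewrite /uu -powR_mulrn ?powR_ge0 // -powRrM; congr powR.
by rewrite mulrC.
Qed.

Lemma DjE {R : realType} (C p : R) j : Dj C p j = 1 + C ^+ 2 * \sum_(0 <= i < j) ww p i ^+ 2.
Proof. by rewrite /Dj big_mkord; congr (_ + _ * _); apply: eq_bigr => i _; rewrite ww2. Qed.

Lemma DjS {R : realType} (C p : R) j : Dj C p j.+1 = Dj C p j + C ^+ 2 * ww p j ^+ 2.
Proof. by rewrite !DjE big_nat_recr //= mulrDr addrA. Qed.

Lemma Dj_ge1 {R : realType} (C p : R) j : 1 <= Dj C p j.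
Proof.
rewrite DjE lerDl mulr_ge0 ?sqr_ge0 //; apply: sumr_ge0 => i _; exact: sqr_ge0.
Qed.

Lemma Dj_gt0 {R : realType} (C p : R) j : 0 < Dj C p j.
Proof. exact: (lt_le_trans ltr01 (Dj_ge1 C p j)). Qed.
Definition bs (R : realType) (d : nat) (C p : R) (k i : nat) : R :=
  if (i < k)%N then - (C ^+ 2 * lnp R k * powR (lnp R i) (1 - p^-1)) / Dj C p k
  else if i == k then powR (lnp R k) p^-1
  else if (i < d)%N then 0
  else C * lnp R k / Dj C p k.
Arguments bs {R}.
Definition bsr (R : realType) (d : nat) (C p : R) (k : nat) : 'rV[R]_(d.+1) :=
  \row_(i < d.+1) bs d C p k i.
Arguments bsr {R}.

Lemma dotv_row (R : realType) n (f g : nat -> R) :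
  dotv (\row_(i < n.+1) f i) (\row_(i < n.+1) g i) = \sum_(0 <= i < n) f i * g i + f n * g n.
Proof.
rewrite /dotv big_ord_recr /= !mxE big_mkord; congr (_ + _).
by apply: eq_bigr => i _; rewrite !mxE.
Qed.

Lemma dot_vb (R : realType) d (C p : R) k (f : nat -> R) j :
  (k <= d)%N -> (j < k)%N -> (forall i, (i < k)%N -> f i = 0) ->
  dotv (\row_(i < d.+1) f i) (bsr d C p j) = f d * (C * lnp R j / Dj C p j).
Proof.
move=> hkd hjk hf; rewrite /bsr dotv_row big_nat big1 ?add0r.
  have hjd := leq_trans hjk hkd.
  rewrite /bs ltnNge (ltnW hjd) /= ltnn ifF //.
  by apply/negbTE; rewrite neq_ltn hjd orbT.
move=> i /andP[_ hi]; case: (ltnP i k) => hik; first by rewrite hf // mul0r.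
rewrite /bs ltnNge (ltnW (leq_trans hjk hik)) /= hi.
by rewrite eqn_leq [(i <= j)%N]leqNgt (leq_trans hjk hik) /= mulr0.
Qed.

Lemma dot_bb (R : realType) d (C p : R) j : (j < d)%N ->
  dotv (bsr d C p j) (bsr d C p j) = uu p j ^+ 2 * (Dj C p j.+1 / Dj C p j).
Proof.
move=> hj; rewrite /bsr dotv_row.
rewrite (big_cat_nat (leq0n j) (ltnW hj)) /= (big_cat_nat (leqnSn j) hj) /= big_nat1.
rewrite [X in _ + (_ + X) + _](_ : _ = 0); last first.
  rewrite big_nat big1 // =>  i /andP[hi hid]; rewrite /bs ltnNge (ltnW hi) /= hid.
  by rewrite eqn_leq [(i <= j)%N]leqNgt hi /= mulr0.
have -> : \sum_(0 <= i < j) bs d C p j i * bs d C p j i =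
   (C ^+ 2 * lnp R j / Dj C p j) ^+ 2 * \sum_(0 <= i < j) ww p i ^+ 2.
  rewrite mulr_sumr; apply: eq_big_nat => i /andP[_ hi].
  rewrite /bs hi /ww; rewrite -!/(ww p i); ring.
rewrite /bs ltnn eqxx ltnNge (ltnW hj) /= ltnn ifF; last first.
  by apply/negbTE; rewrite neq_ltn hj orbT.
rewrite -/(uu p j) DjS -(uw p j); have hD := Dj_gt0 C p j; rewrite DjE in hD *.
have hu : 0 < uu p j by rewrite /uu powR_gt0 // lnp_gt0.
set S := \sum_(0 <= i < j) _; rewrite addr0.
field; rewrite ?gt_eqF //.
Qed.

Lemma Dj0 {R : realType} (C p : R) : Dj C p 0 = 1.
Proof. by rewrite /Dj big_ord0 mulr0 addr0. Qed.

Definition cf {R : realType} (C p A : R) j :=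
  C * A * (C * lnp R j / Dj C p j) / (uu p j ^+ 2 * (Dj C p j.+1 / Dj C p j)).

Lemma cf1 {R : realType} (C p A : R) j :
  cf C p A j * (C * lnp R j / Dj C p j) =
  (- (C * A) / Dj C p j.+1) - (- (C * A) / Dj C p j).
Proof.
rewrite /cf DjS -(uw p j).
have hD := Dj_gt0 C p j.
have hD1 := Dj_gt0 C p j.+1; rewrite DjS in hD1.
have hu : 0 < uu p j by rewrite /uu powR_gt0 // lnp_gt0.
field; rewrite ?gt_eqF //.
by rewrite exprMn.
Qed.

Lemma cf2 {R : realType} (C p A : R) j :
  cf C p A j * uu p j = C ^+ 2 * A * ww p j / Dj C p j.+1.
Proof.
rewrite /cf -(uw p j).
have hD := Dj_gt0 C p j.
have hD1 := Dj_gt0 C p j.+1.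
have hu : 0 < uu p j by rewrite /uu powR_gt0 // lnp_gt0.
field; rewrite ?gt_eqF //.
Qed.

Lemma step {R : realType} d (C p A : R) k (f : nat -> R) (i : 'I_(d.+1)) :
  (k <= d)%N -> (forall i, (i < k)%N -> f i = 0) -> f d = C * A ->
  ((\row_(i < d.+1) f i) - \sum_(x <- [seq bsr d C p j | j <- iota 0 k])
      (dotv (\row_(i < d.+1) f i) x / dotv x x) *: x) 0 i
  = if (i < k)%N then - (C ^+ 2 * A * ww p i) / Dj C p k
    else if (i < d)%N then f i else C * A / Dj C p k.
Proof.
move=> hkd hf hfd; rewrite !mxE summxE big_map.
have -> : iota 0 k = index_iota 0 k by rewrite /index_iota subn0.
have E : \sum_(0 <= j < k) ((dotv (\row_(i0 < d.+1) f i0) (bsr d C p j) /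
        dotv (bsr d C p j) (bsr d C p j)) *: bsr d C p j) 0 i =
    \sum_(0 <= j < k) cf C p A j * bs d C p j i.
  apply: eq_big_nat => j /andP[_ hj].
  rewrite mxE (@dot_vb R d C p k f j hkd hj hf) dot_bb ?(leq_trans hj hkd) // hfd mxE.
  by [].
rewrite E {E}.
have hDk := Dj_gt0 C p k.
case: (ltnP i k) => hik.
  have hid : (i < d)%N := leq_trans hik hkd.
  rewrite hf // (big_cat_nat (leq0n i) (ltnW hik)) /= (big_cat_nat (leqnSn i) hik) /= big_nat1.
  rewrite big_nat big1 ?add0r; last first.
    move=> j /andP[_ hj]; rewrite /bs ltnNge (ltnW hj) /= ifF ?hid ?mulr0 //.
    by apply/negbTE; rewrite neq_ltn hj orbT.
  rewrite /bs ltnn eqxx -/(uu p i) cf2.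
  have -> : \sum_(i.+1 <= j < k) cf C p A j * bs d C p j i =
     - (C * ww p i) * \sum_(i.+1 <= j < k) ((- (C * A) / Dj C p j.+1) - (- (C * A) / Dj C p j)).
    rewrite mulr_sumr; apply: eq_big_nat => j /andP[hj _].
    rewrite /bs hj -cf1 -/(ww p i); ring.
  rewrite (telescope_sumr (fun j => - (C * A) / Dj C p j) hik).
  have hD1 := Dj_gt0 C p i.+1.
  field; rewrite ?gt_eqF //.
have hji : forall j, (j < k)%N -> bs d C p j i = if (i < d)%N then 0 else C * lnp R j / Dj C p j.
  move=> j hj; rewrite /bs ltnNge (ltnW (leq_trans hj hik)) /= ifF //.
  by apply/negbTE; rewrite neq_ltn (leq_trans hj hik) orbT.
case: ifP => hid.
  rewrite big_nat big1 ?subr0 // => j /andP[_ hj]; by rewrite hji // hid mulr0.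
have hi : (i : nat) = d by apply/eqP; rewrite eqn_leq -ltnS ltn_ord leqNgt hid.
have -> : \sum_(0 <= j < k) cf C p A j * bs d C p j i =
   \sum_(0 <= j < k) ((- (C * A) / Dj C p j.+1) - (- (C * A) / Dj C p j)).
  by apply: eq_big_nat => j /andP[_ hj]; rewrite hji // hid -cf1.
rewrite (telescope_sumr (fun j => - (C * A) / Dj C p j) (leq0n k)) Dj0 hi hfd.
field; rewrite ?gt_eqF //.
Qed.

Definition bvn {R : realType} d (C p : R) (j : nat) : 'rV[R]_(d.+1) :=
  \row_(i < d.+1) (if (i : nat) == j then powR (lnp R j) p^-1
                   else if (i : nat) == d then C * lnp R j else 0).

Definition tsf {R : realType} d N (C p : R) (i : nat) : R :=
  if (i < d)%N then - (C ^+ 2 * ln (N%:R : R) * ww p i) / Dj C p d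
  else C * ln (N%:R : R) / Dj C p d.
Definition tsr {R : realType} d N (C p : R) : 'rV[R]_(d.+1) :=
  \row_(i < d.+1) tsf d N C p i.

Lemma gs_b {R : realType} d (C p : R) m : (m <= d)%N ->
  gram_schmidt [seq bvn d C p j | j <- iota 0 m] = [seq bsr d C p j | j <- iota 0 m].
Proof.
elim: m => [//|m IH] hm.
have -> : iota 0 m.+1 = iota 0 m ++ [:: m] by rewrite -addn1 iotaD.
rewrite !map_cat /gram_schmidt foldl_cat -/(gram_schmidt _) IH ?(ltnW hm) //=.
rewrite /gs_step cats1; congr rcons.
apply/rowP => i.
rewrite /bvn (@step R d C p (lnp R m) m
   (fun i => if i == m then powR (lnp R m) p^-1 else if i == d then C * lnp R m else 0)) ?(ltnW hm) //.
- rewrite /bsr mxE /bs; case: ifP => // hi; case: ifP => hid.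
    by case: ifP => // _; rewrite ifF //; apply/negbTE; rewrite neq_ltn hid.
  rewrite ifF //; apply/negbTE.
  by rewrite neq_ltn (leq_trans hm) ?orbT // leqNgt hid.
- by move=> i0 hi0; rewrite ifF ?ifF //; apply/negbTE; rewrite neq_ltn ?hi0 // (leq_trans hi0 (ltnW hm)).
- by rewrite ifF ?eqxx //; apply/negbTE; rewrite neq_ltn hm orbT.
Qed.

Lemma gsE {R : realType} d N (C p : R) :
  gs_family d N C p = rcons [seq bsr d C p j | j <- iota 0 d] (tsr d N C p).
Proof.
rewrite /gs_family /Defs.family.
have -> : [seq bvec d C p k | k <- enum 'I_d] = [seq bvn d C p j | j <- iota 0 d].
  by rewrite -val_enum_ord -map_comp.
rewrite /gram_schmidt foldl_cat -/(gram_schmidt _) gs_b //=.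
rewrite /gs_step; congr rcons.
apply/rowP => i.
rewrite /tvec (@step R d C p (ln (N%:R : R)) d (fun i => if i == d then C * ln (N%:R : R) else 0)) //.
- by rewrite /tsr mxE /tsf; case: ifP => // ->.
- by move=> i0 hi0; rewrite ifF //; apply/negbTE; rewrite neq_ltn hi0.
- by rewrite eqxx.
Qed.

Lemma bstarE {R : realType} d N (C p : R) (k : 'I_d) : bstar d N C p k = bsr d C p k.
Proof.
rewrite /bstar -/(gs_family d N C p) gsE nth_rcons size_map size_iota ltn_ord.
by rewrite (nth_map 0) ?size_iota // nth_iota.
Qed.

Lemma tstarE {R : realType} d N (C p : R) : tstar d N C p = tsr d N C p.
Proof.
by rewrite /tstar -/(gs_family d N C p) gsE nth_rcons size_map size_iota ltnn eqxx.
Qed.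

Theorem theorem4 (R : realType) (d N : nat) (C p : R) :
  (1 <= d)%N -> (1 <= N)%N -> 0 < C -> 1 <= p ->
  (forall (k : 'I_d) (i : 'I_(d.+1)),
     bstar d N C p k 0 i =
       if (i < k)%N then
         - (C ^+ 2 * lnp R k * powR (lnp R i) (1 - p^-1)) / Dj C p k
       else if (i : nat) == (k : nat) then powR (lnp R k) p^-1
       else if (i < d)%N then 0
       else C * lnp R k / Dj C p k) /\
  (forall i : 'I_(d.+1),
     tstar d N C p 0 i =
       if (i < d)%N then
         - (C ^+ 2 * ln (N%:R : R) * powR (lnp R i) (1 - p^-1)) / Dj C p d
       else C * ln (N%:R : R) / Dj C p d) /\
  (forall k : 'I_d,
     dotv (bstar d N C p k) (bstar d N C p k) =
       powR (lnp R k) (2 / p) * (Dj C p k.+1 / Dj C p k)) /\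
  dotv (tstar d N C p) (tstar d N C p) = (C * ln (N%:R : R)) ^+ 2 / Dj C p d /\
  (forall i : 'I_(d.+1),
     (tvec d N C - tstar d N C p) 0 i =
       if (i < d)%N then
         C ^+ 2 * ln (N%:R : R) * powR (lnp R i) (1 - p^-1) / Dj C p d
       else C * ln (N%:R : R) * (Dj C p d - 1) / Dj C p d).
Proof.
move=> _ _ _ _.
have hD := Dj_gt0 C p d.
split; first by move=> k i; rewrite bstarE mxE.
split; first by move=> i; rewrite tstarE mxE /tsf.
split; first by move=> k; rewrite bstarE dot_bb // uu2.
split.
  rewrite tstarE /tsr dotv_row /tsf ltnn.
  have -> : \sum_(0 <= i < d)
      (if (i < d)%N then - (C ^+ 2 * ln (N%:R : R) * ww p i) / Dj C p d
       else C * ln (N%:R : R) / Dj C p d) *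
      (if (i < d)%N then - (C ^+ 2 * ln (N%:R : R) * ww p i) / Dj C p d
       else C * ln (N%:R : R) / Dj C p d) =
      (C ^+ 2 * ln (N%:R : R) / Dj C p d) ^+ 2 * \sum_(0 <= i < d) ww p i ^+ 2.
    rewrite mulr_sumr; apply: eq_big_nat => i /andP[_ hi]; rewrite hi; ring.
  rewrite DjE in hD *; set S := \sum_(0 <= i < d) _.
  field; rewrite ?gt_eqF //.
move=> i; rewrite tstarE !mxE /tsf.
have [hi|hi] := boolP (i < d)%N.
  rewrite ifF; last by apply/negbTE; rewrite neq_ltn hi.
  rewrite /ww; field; rewrite ?gt_eqF //.
rewrite ifT; last by rewrite eqn_leq -ltnS ltn_ord leqNgt hi.
field; rewrite ?gt_eqF //.
Qed.
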